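(* Let $R\subseteq T$ be an extension of rings. Suppose $V$ is a maximal subring of $T$ and $x\in U(R)\setminus V$ satisfies $xV=Vx$ (in particular this holds if $V$ is a duo ring). If $x^{-1}\in V$ (in particular, if $V$ is left integrally closed in $T$), then $R$ has a maximal subring.
   Context: All rings are associative with identity $1\neq0$; subrings contain the identity. A maximal subring of $T$ is a proper subring with no subring strictly between it and $T$. $U(R)$ is the unit group of $R$. A ring is duo if every one-sided ideal is two-sided. $t\in T$ is left integral over $V$ if $t^n+v_{n-1}t^{n-1}+\cdots+v_1t+v_0=0$ for some $n\geq1$ and $v_i\in V$ (coefficients on the left); $V$ is left integrally closed in $T$ if every element of $T$ left integral over $V$ lies in $V$. *)

(* Defs.v *)
From mathcomp Require Import all_boot all_algebra.
Set Implicit Arguments. Unset Strict Implicit. Unset Printing Implicit Defensive.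
Import GRing.Theory.
Local Open Scope ring_scope.

Definition subset_of (T : Type) (A B : T -> Prop) : Prop := forall t, A t -> B t.

Definition is_subring (T : nzRingType) (S : T -> Prop) : Prop :=
  [/\ S 1, (forall a b, S a -> S b -> S (a - b)) & (forall a b, S a -> S b -> S (a * b))].

(* S is a maximal subring of the ring A, where A is itself a subring of T
   (subrings of A are exactly the subrings of T contained in A). *)
Definition is_maximal_subring_of (T : nzRingType) (A S : T -> Prop) : Prop :=
  [/\ is_subring S, subset_of S A, (exists a, A a /\ ~ S a) &
      (forall W, is_subring W -> subset_of S W -> subset_of W A ->
         subset_of W S \/ subset_of A W)].

Definition is_unit_in (T : nzRingType) (A : T -> Prop) (x : T) : Prop :=
  A x /\ exists y, A y /\ x * y = 1 /\ y * x = 1.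

Definition comm_set (T : nzRingType) (x : T) (V : T -> Prop) : Prop :=
  (forall v, V v -> exists w, V w /\ x * v = w * x) /\
  (forall v, V v -> exists w, V w /\ v * x = x * w).

(* Main.v *)
Require Import Defs.
From mathcomp Require Import all_boot all_algebra.
From mathcomp Require Import boolp classical_sets.
Local Open Scope ring_scope.
Import GRing.Theory.

Lemma sub_pow (T : nzRingType) (W : T -> Prop) (y : T) (n : nat) :
  is_subring W -> W y -> W (y ^+ n).
Proof.
move=> [W1 _ Wm] Wy; elim: n => [|n IH]; first by rewrite expr0.
by rewrite exprS; apply: Wm.
Qed.

Lemma pow_inv (T : nzRingType) (x y : T) (n : nat) :
  y * x = 1 -> y ^+ n * x ^+ n = 1.
Proof.
move=> yx; elim: n => [|n IH]; first by rewrite !expr0 mulr1.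
by rewrite exprSr exprS -mulrA (mulrA y) yx mul1r.
Qed.

Lemma key (T : nzRingType) (V : T -> Prop) (x y : T) :
  is_maximal_subring_of (fun _ => True) V -> ~ V x -> comm_set x V ->
  V y -> x * y = 1 -> y * x = 1 ->
  forall t, exists n, V (t * y ^+ n).
Proof.
move=> [Vs _ _ Vmax] Vx [cx _] Vy xy yx.
have Vs' := Vs; case: Vs' => [V1 Vsub Vmul].
have comm1 : forall v, V v -> exists w, V w /\ v * y = y * w.
  move=> v Vv; have [w [Vw e]] := cx v Vv; exists w; split => //.
  have -> : v * y = y * (x * v) * y by rewrite mulrA yx mul1r.
  by rewrite e -!mulrA xy mulr1.
have commk : forall k v, V v -> exists w, V w /\ v * y ^+ k = y ^+ k * w.
  elim=> [|k IH] v Vv; first by exists v; rewrite !expr0 mulr1 mul1r.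
  have [w [Vw e]] := IH v Vv; have [w' [Vw' e']] := comm1 w Vw.
  exists w'; split => //; by rewrite exprSr mulrA e -mulrA e' mulrA.
pose P t := exists n, V (t * y ^+ n).
have Ps : is_subring P.
  split.
  - by exists 0%N; rewrite expr0 mulr1.
  - move=> a b [n Ha] [m Hb]; exists (n + m)%N.
    rewrite mulrBl; apply: Vsub.
      by rewrite exprD mulrA; apply: Vmul => //; exact: sub_pow.
    by rewrite addnC exprD mulrA; apply: Vmul => //; exact: sub_pow.
  - move=> a b [n Ha] [m Hb]; exists (m + n)%N.
    have [w [Vw e]] := commk n _ Hb.
    by rewrite exprD mulrA -(mulrA a b) -(mulrA a) e mulrA; apply: Vmul.
case: (Vmax P Ps) => //.
- by move=> v Vv; exists 0%N; rewrite expr0 mulr1.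
- by move=> /(_ x) H; exfalso; apply: Vx; apply: H; exists 1%N; rewrite expr1 xy.
by move=> H t; apply: H.
Qed.

Theorem proposition3p3 (T : nzRingType) (R V : T -> Prop) (x : T) :
  is_subring R ->
  is_maximal_subring_of (fun _ => True) V ->
  is_unit_in R x -> ~ V x ->
  comm_set x V ->
  (forall y, x * y = 1 -> y * x = 1 -> V y) ->
  exists S, is_maximal_subring_of R S.
Proof.
move=> Rs Vm [Rx [y [Ry [xy yx]]]] Vx cx Hinv.
have Vy := Hinv y xy yx.
have K := @key T V x y Vm Vx cx Vy xy yx.
have Vs : is_subring V by case: Vm.
pose S0 t := R t /\ V t.
pose Good (A : T -> Prop) := [/\ is_subring A, subset_of A R, subset_of S0 A & ~ A x].
have Rfull : forall W, is_subring W -> subset_of S0 W -> W x -> subset_of R W.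
  move=> W Ws S0W Wx r Rr; have [n Hn] := K r.
  have -> : r = r * y ^+ n * x ^+ n by rewrite -mulrA pow_inv // mulr1.
  have Wxn := @sub_pow T W x n Ws Wx.
  case: Ws => [_ _ Wm]; apply: Wm => //.
  apply: S0W; split => //; have Ryn := @sub_pow T R y n Rs Ry.
  by case: Rs => [_ _ Rm]; apply: Rm.
have GS0 : Good S0.
  split.
  - case: Rs => [R1 Rsub Rm]; case: Vs => [V1 Vsub Vm'].
    split; first by split.
    + by move=> a b [? ?] [? ?]; split; [apply: Rsub|apply: Vsub].
    + by move=> a b [? ?] [? ?]; split; [apply: Rm|apply: Vm'].
  - by move=> t [].
  - by [].
  - by case.
pose P (A : set T) := Good A \/ A = set0.
have [A [PA Amax]] : exists A, P A /\ forall B, (A `<` B)%classic -> ~ P B.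
  apply: Zorn_bigcup => F FP Ftot.
  have [[X0 FX0 [t X0t]]|none] := pselect (exists2 X, F X & exists t, X t).
    left.
    have good : forall X, F X -> forall t, X t -> Good X.
      move=> X FX u Xu; case: (FP X FX) => // XE; by rewrite XE in Xu.
    have [G0 _ S0X0 _] := good X0 FX0 t X0t.
    have both : forall a b, (\bigcup_(X in F) X)%classic a ->
        (\bigcup_(X in F) X)%classic b ->
        exists2 X, F X & (X a /\ X b).
      move=> a b [X FX Xa] [Y FY Yb].
      case: (Ftot X Y FX FY) => [XY|YX].
        by exists Y => //; split => //; apply: XY.
      by exists X => //; split => //; apply: YX.
    split.
    - split.
      + by exists X0 => //; case: G0.
      + move=> a b Ha Hb; have [X FX [Xa Xb]] := both a b Ha Hb.
        have [[_ Xs _] _ _ _] := good X FX a Xa.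
        by exists X => //; apply: Xs.
      + move=> a b Ha Hb; have [X FX [Xa Xb]] := both a b Ha Hb.
        have [[_ _ Xm] _ _ _] := good X FX a Xa.
        by exists X => //; apply: Xm.
    - by move=> a [X FX Xa]; have [_ XR _ _] := good X FX a Xa; apply: XR.
    - by move=> a Sa; exists X0 => //; apply: S0X0.
    - by move=> [X FX Xx]; have [_ _ _ nX] := good X FX x Xx; apply: nX.
  right; apply/seteqP; split => // a [X FX Xa]; apply: none; by exists X => //; exists a.
have GA : Good A.
  case: PA => // A0; exfalso; apply: (Amax S0); last by left.
  rewrite A0; split => //; move=> /(_ 1); apply; by split; case: Rs; case: Vs.
exists A; case: GA => [As AR S0A nAx]; split => //.
  by exists x.
move=> W Ws AW WR.
have [Wx|nWx] := pselect (W x).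
  by right; apply: Rfull => // t St; apply: AW; apply: S0A.
have [WA|nWA] := pselect (subset_of W A); first by left.
exfalso; apply: (Amax W); last by left; split => // t St; apply: AW; apply: S0A.
split => // e; apply: nWA; rewrite -e; exact: AW.
Qed.
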